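(* Let $G=(V,E)$ be a connected locally finite graph with measure $\mu$ and edge weights $w$ as described in the context, and let $m\ge1$ be an integer. Suppose there are positive constants $\mu_0,\mu_1,w_0$ such that $\mu_0\le\mu(x)\le\mu_1$ for all $x\in V$ and $w_{xy}\ge w_0$ for all $xy\in E$. Then there exists a constant $C$ depending only on $\mu_0,\mu_1,w_0$ and $m$ such that for every $u\in W_0^{m,1}(V)$ and every integer $j\in[0,m/2]$, $$\|\Delta^ju\|_\infty\le C\int_V|\nabla\Delta^ju|\,d\mu.$$
   Context: $G=(V,E)$ is a connected graph with infinitely many vertices in which every vertex has finitely many neighbours; $y\sim x$ means $xy\in E$. A measure $\mu:V\to(0,+\infty)$ is given, and each edge $xy\in E$ carries a weight $w_{xy}>0$. For $u:V\to\mathbb{R}$ define $\Delta u(x)=\frac{1}{\mu(x)}\sum_{y\sim x}w_{xy}(u(y)-u(x))$ and $|\nabla u|(x)=\big(\frac{1}{2\mu(x)}\sum_{y\sim x}w_{xy}(u(y)-u(x))^2\big)^{1/2}$. Integrals are $\int_V f\,d\mu=\sum_{x\in V}\mu(x)f(x)$; $\|f\|_1=\int_V|f|d\mu$ and $\|f\|_\infty=\sup_{x\in V}|f(x)|$. Set $\Delta^0u=u$, $\Delta^ku=\Delta(\Delta^{k-1}u)$, $|\nabla\Delta^ku|=|\nabla(\Delta^ku)|$, and $|\nabla^j u|=|\Delta^k u|$ if $j=2k$, $|\nabla^ju|=|\nabla(\Delta^ku)|$ if $j=2k+1$. $W^{m,1}(V)$ is the space of $u$ with norm $\|u\|_{W^{m,1}(V)}=\sum_{j=0}^m\||\nabla^ju|\|_1<\infty$;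 $C_c(V)$ is the set of finitely supported functions on $V$, and $W_0^{m,1}(V)$ is the completion of $C_c(V)$ under $\|\cdot\|_{W^{m,1}(V)}$. *)

(* Defs.v *)
From HB Require Import structures.
From mathcomp Require Import all_boot all_order all_algebra.
From mathcomp Require Import all_classical all_reals all_analysis.
Set Implicit Arguments. Unset Strict Implicit. Unset Printing Implicit Defensive.
Import Order.TTheory GRing.Theory Num.Theory.
Local Open Scope ring_scope.
Local Open Scope classical_set_scope.

(* A weighted graph on vertex type V: adj x is the (finite, duplicate-free)
   list of neighbours of x; w is the edge weight; mu the vertex measure. *)
Section Graph.
Variables (R : realType) (V : choiceType).
Variables (adj : V -> seq V) (mu : V -> R) (w : V -> V -> R).

Definition is_weighted_graph : Prop :=
  [/\ (forall x, uniq (adj x)),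
      (forall x y, (y \in adj x) = (x \in adj y)),
      (forall x y, y \in adj x -> w x y = w y x),
      (forall x y, y \in adj x -> 0 < w x y) &
      (forall x, 0 < mu x)].

Definition graph_connected : Prop :=
  forall x y : V, exists p : seq V,
    path (fun a b => b \in adj a) x p /\ last x p = y.

Definition graph_infinite : Prop := ~ finite_set [set: V].

Definition lap (u : V -> R) : V -> R :=
  fun x => (mu x)^-1 * \sum_(y <- adj x) w x y * (u y - u x).

Definition grad (u : V -> R) : V -> R :=
  fun x => Num.sqrt ((2 * mu x)^-1 * \sum_(y <- adj x) w x y * (u y - u x) ^+ 2).

Definition lapn (k : nat) (u : V -> R) : V -> R := iter k lap u.

Definition gradj (j : nat) (u : V -> R) : V -> R :=
  if odd j then grad (lapn j./2 u) else (fun x => `|lapn j./2 u x|).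

Definition norm1 (f : V -> R) : \bar R :=
  (\esum_(x in [set: V]) ((mu x * `|f x|)%:E))%E.

Definition norminf (f : V -> R) : \bar R :=
  ereal_sup [set (`|f x|)%:E | x in [set: V]].

Definition Wnorm (m : nat) (u : V -> R) : \bar R :=
  (\sum_(0 <= j < m.+1) norm1 (gradj j u))%E.

Definition fin_supp (f : V -> R) : Prop := finite_set [set x | f x != 0].

(* u belongs to W_0^{m,1}(V): the closure of C_c(V) for the W^{m,1} norm *)
Definition inW0 (m : nat) (u : V -> R) : Prop :=
  forall eps : R, 0 < eps ->
    exists phi : V -> R, fin_supp phi /\ ((Wnorm m (fun x => (phi x - u x)%R) ) < eps%:E)%E.

End Graph.

(* Main.v *)
Require Import Defs.
From HB Require Import structures.
From mathcomp Require Import all_boot all_order all_algebra.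
From mathcomp Require Import all_classical all_reals all_analysis.
From mathcomp Require Import ring lra.
Import Order.TTheory GRing.Theory Num.Theory.
Local Open Scope ring_scope.
Local Open Scope classical_set_scope.

Definition Cst {R : realType} (mu0 mu1 w0 : R) : R := Num.sqrt (2 * mu1 / w0) / mu0.

Section Aux.
Variables (R : realType) (V : choiceType) (adj : V -> seq V) (mu : V -> R) (w : V -> V -> R).
Variables (mu0 mu1 w0 : R).
Hypotheses (Hmu0 : 0 < mu0) (Hw0 : 0 < w0)
  (Hmu : forall x, mu0 <= mu x <= mu1)
  (Hw : forall x y, y \in adj x -> w0 <= w x y)
  (Hsym : forall x y, (y \in adj x) = (x \in adj y)).

Lemma grad_ge0 f x : 0 <= grad adj mu w f x.
Proof. exact: sqrtr_ge0. Qed.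

Lemma sum_term (s : seq V) (F : V -> R) y : y \in s ->
  (forall z, z \in s -> 0 <= F z) -> F y <= \sum_(z <- s) F z.
Proof.
move=> ys F0; rewrite (big_rem y ys) /= lerDl big_seq.
apply: sumr_ge0 => z zin; apply: F0; exact: (mem_rem zin).
Qed.

Lemma edge_sq f x y : y \in adj x ->
  (f y - f x)^+2 <= (2 * mu1 / w0) * (grad adj mu w f x)^+2.
Proof.
move=> yx; case/andP: (Hmu x) => h0 h1.
have mxpos : 0 < mu x by apply: lt_le_trans h0.
set S := \sum_(z <- adj x) w x z * (f z - f x)^+2.
have S0 : 0 <= S.
  rewrite /S big_seq; apply: sumr_ge0 => z zin; apply: mulr_ge0.
    by apply: (le_trans (ltW Hw0)); exact: Hw.
  exact: sqr_ge0.
have gsq : (grad adj mu w f x)^+2 = (2 * mu x)^-1 * S.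
  rewrite /grad sqr_sqrtr //; apply: mulr_ge0 => //.
  by rewrite invr_ge0; apply: mulr_ge0 => //; apply: ltW.
have Ht : w x y * (f y - f x)^+2 <= S.
  apply: (@sum_term (adj x) (fun z => w x z * (f z - f x)^+2) y) => // z zin.
  apply: mulr_ge0; last exact: sqr_ge0.
  by apply: (le_trans (ltW Hw0)); exact: Hw.
have Ht2 : w0 * (f y - f x)^+2 <= S.
  apply: le_trans Ht; apply: ler_wpM2r; [exact: sqr_ge0 | exact: Hw].
rewrite gsq.
have -> : 2 * mu1 / w0 * ((2 * mu x)^-1 * S) = (mu1 * S) / (w0 * mu x).
  by field; apply/andP; split; rewrite gt_eqF.
rewrite ler_pdivlMr; last by apply: mulr_gt0.
have a0 := sqr_ge0 (f y - f x).
set a := (f y - f x)^+2 in a0 Ht2 *.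
nra.
Qed.

Lemma edge_bound f x y : y \in adj x ->
  `|f y - f x| <= Cst mu0 mu1 w0 * (mu x * grad adj mu w f x).
Proof.
move=> yx; have := @edge_sq f x y yx.
set g := grad adj mu w f x; set c := Num.sqrt (2 * mu1 / w0).
have g0 : 0 <= g by exact: grad_ge0.
have c0 : 0 <= c by exact: sqrtr_ge0.
have K0 : 0 <= 2 * mu1 / w0.
  case/andP: (Hmu x) => h0 h1.
  apply: divr_ge0; last exact: ltW.
  by apply: mulr_ge0 => //; apply: le_trans h1; apply: le_trans h0; apply: ltW.
have -> : 2 * mu1 / w0 * g ^+ 2 = (c * g) ^+ 2.
  by rewrite /c exprMn (sqr_sqrtr K0).

move=> H0.
have H : `|f y - f x| <= c * g.
  rewrite -ler_sqr ?nnegrE ?normr_ge0 ?mulr_ge0 //.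
  by rewrite real_normK ?num_real.
case/andP: (Hmu x) => h0 h1.
rewrite /Cst -/c.
have -> : c / mu0 * (mu x * g) = (c * g * mu x) / mu0 by field; rewrite gt_eqF.
rewrite ler_pdivlMr //.
have cg0 : 0 <= c * g by apply: mulr_ge0.
exact: le_trans (ler_wpM2r (ltW Hmu0) H) (ler_wpM2l cg0 h0).
Qed.

Lemma Cst_ge0 : 0 <= Cst mu0 mu1 w0.
Proof. by apply: divr_ge0; [exact: sqrtr_ge0 | exact: ltW]. Qed.

Lemma path_bound f : forall p x, path (fun a b => b \in adj a) x p ->
  `|f x - f (last x p)| <=
    Cst mu0 mu1 w0 * \sum_(z <- x :: p) mu z * `|grad adj mu w f z|.
Proof.
elim => [|a p IH] x /=.
  move=> _; rewrite subrr normr0 big_seq1; apply: mulr_ge0; first exact: Cst_ge0.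
  apply: mulr_ge0 (normr_ge0 _).
  by case/andP: (Hmu x) => h0 _; apply: le_trans h0; apply: ltW.
move=> /andP [ax Hp].
have h1 := @edge_bound f x a ax.
have h2 := IH a Hp.
rewrite big_cons /= in h2 *.
rewrite (ger0_norm (grad_ge0 f x)) mulrDr.
apply: le_trans (ler_distD (f a) _ _) _.
rewrite distrC.
set A := `|f a - f x| in h1 *.
set B := `|f a - f _| in h2 *.
lra.
Qed.

Lemma seq_le_norm1 (g : V -> R) (s : seq V) : uniq s ->
  ((\sum_(z <- s) mu z * `|g z|)%:E <= norm1 mu g)%E.
Proof.
move=> us; rewrite /norm1; apply: esum_ge.
exists [set` s]; first by split => //; apply/finite_seqP; exists s.
by rewrite -fsbig_seq // sumEFin.
Qed.

Lemma lap_sub f g : lap adj mu w (fun x => f x - g x) =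
  (fun x => lap adj mu w f x - lap adj mu w g x).
Proof.
apply/funext => x; rewrite /lap -mulrBr -sumrB; congr (_ * _).
by apply: eq_bigr => z _; ring.
Qed.

Lemma lapn_sub j f g : lapn adj mu w j (fun x => f x - g x) =
  (fun x => lapn adj mu w j f x - lapn adj mu w j g x).
Proof.
elim: j => [//|j IH].
have E : forall h, lapn adj mu w j.+1 h = lap adj mu w (lapn adj mu w j h) by [].
by rewrite !E IH lap_sub.
Qed.

Definition supp_in (f : V -> R) (s : seq V) := forall x, f x != 0 -> x \in s.

Lemma lap_supp f s : supp_in f s ->
  supp_in (lap adj mu w f) (s ++ flatten (map adj s)).
Proof.
move=> Hs x; case: (boolP (x \in _)) => // xn nz; exfalso.
move: xn; rewrite mem_cat negb_or => /andP [xs xf].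
have fx0 : f x = 0.
  by case: (eqVneq (f x) 0) => // /Hs; rewrite (negbTE xs).
move/eqP: nz; apply; rewrite /lap big_seq big1 ?mulr0 // => z zx.
have fz0 : f z = 0.
  case: (eqVneq (f z) 0) => // /Hs zs; exfalso; move/negP: xf; apply.
  apply/flattenP; exists (adj z); first by apply/mapP; exists z.
  by rewrite -Hsym.
by rewrite fz0 fx0 subrr mulr0.
Qed.

Lemma lapn_supp j f s : supp_in f s -> exists s', supp_in (lapn adj mu w j f) s'.
Proof.
move=> Hs; elim: j => [|j [s' IH]]; first by exists s.
exists (s' ++ flatten (map adj s')); exact: (@lap_supp _ s' IH).
Qed.

Lemma term_le (F : nat -> \bar R) (n k : nat) : (k <= n)%N -> (forall i, (0 <= F i)%E) ->
  (F k <= \sum_(0 <= i < n.+1) F i)%E.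
Proof.
move=> kn F0; rewrite (bigD1_seq k); last exact: iota_uniq.
  by apply: leeDl; apply: sume_ge0 => i _; exact: F0.
by rewrite mem_index_iota.
Qed.

Lemma Cst_gt0 (x : V) : 0 < Cst mu0 mu1 w0.
Proof.
case/andP: (Hmu x) => h0 h1.
apply: divr_gt0 => //; rewrite sqrtr_gt0; apply: divr_gt0 => //.
by apply: mulr_gt0 => //; apply: lt_le_trans h1; apply: lt_le_trans h0.
Qed.

Lemma main_lemma (m : nat) :
  graph_connected adj -> graph_infinite V ->
  forall u : V -> R, inW0 adj mu w m u ->
  forall j : nat, (j.*2 <= m)%N ->
  (norminf (lapn adj mu w j u) <=
     (Cst mu0 mu1 w0)%:E * norm1 mu (grad adj mu w (lapn adj mu w j u)))%E.
Proof.
move=> Hconn Hinf u HW j Hj.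
set f := lapn adj mu w j u.
have mupos : forall x, 0 < mu x.
  by move=> x; case/andP: (Hmu x) => h0 _; apply: lt_le_trans h0.
have smallA : forall e : R, 0 < e -> exists y, `|f y| < e.
  move=> e e0.
  have [phi [Hfs HWn]] := HW (e * mu0) (mulr_gt0 e0 Hmu0).
  set h := (fun x => phi x - u x) in HWn.
  have T : (norm1 mu (gradj adj mu w j.*2 h) <= Wnorm adj mu w m h)%E.
    apply: term_le => // i; apply: esum_ge0 => x _.
    by rewrite lee_fin; apply: mulr_ge0 (normr_ge0 _); apply: ltW.
  have G : gradj adj mu w j.*2 h = fun x => `|lapn adj mu w j h x|.
    by rewrite /gradj odd_double doubleK.
  rewrite G in T.
  have [s Hs] : exists s, supp_in phi s.
    move/finite_seqP: Hfs => [s Hs]; exists s => x nz.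
    have : [set x | phi x != 0] x by [].
    by rewrite Hs.
  have [s' Hs'] := @lapn_supp j phi s Hs.
  have [y ys'] : exists y, y \notin s'.
    have : ~ (forall y, y \in s').
      move=> all; apply: Hinf.
      apply: (@sub_finite_set _ _ [set` s']).
        by move=> y _ /=; exact: all.
      by apply/finite_seqP; exists s'.
    by move/existsNP => [y /negP ys']; exists y.
  have py : lapn adj mu w j phi y = 0.
    by case: (eqVneq (lapn adj mu w j phi y) 0) => // /Hs'; rewrite (negbTE ys').
  have S1 := @seq_le_norm1 (fun x => `|lapn adj mu w j h x|) [:: y] isT.
  rewrite big_seq1 in S1.
  have := le_lt_trans (le_trans S1 T) HWn.
  rewrite lte_fin /h lapn_sub py sub0r normrN normr_id => H.
  exists y.
  have : `|f y| * mu0 < e * mu0.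
    apply: le_lt_trans H; rewrite mulrC -/f; apply: ler_wpM2r; first exact: normr_ge0.
    by case/andP: (Hmu y).
  by rewrite ltr_pM2r.
rewrite /norminf; apply: ge_ereal_sup => _ [x _ <-].
have N0 : (0 <= norm1 mu (grad adj mu w f))%E.
  apply: esum_ge0 => z _.
  by rewrite lee_fin; apply: mulr_ge0 (normr_ge0 _); apply: ltW.
case E: (norm1 mu (grad adj mu w f)) N0 => [r| |] N0 //; last first.
  by rewrite gt0_muley ?lte_fin ?leey //; exact: Cst_gt0 x.
rewrite -EFinM lee_fin.
apply/ler_addgt0Pr => e e0.
have [y Hy] := smallA e e0.
have [p [Hp Hl]] := Hconn x y.
move: Hy; rewrite -Hl; case: (shortenP Hp) => p' Hp' Hu _ Hy.
have PB := @path_bound f p' x Hp'.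
have SB := @seq_le_norm1 (grad adj mu w f) _ Hu.
rewrite E lee_fin in SB.
have CB := ler_wpM2l (Cst_ge0) SB.
have -> : f x = (f x - f (last x p')) + f (last x p') by ring.
apply: le_trans (ler_normD _ _) _.
set A := `|f x - _| in PB *.
set B := `|f (last x p')| in Hy *.
set S := \sum_(_ <- _) _ in PB CB.
lra.
Qed.

End Aux.

Theorem theorem1p6 (R : realType) (mu0 mu1 w0 : R) (m : nat) :
  0 < mu0 -> 0 < mu1 -> 0 < w0 -> (1 <= m)%N ->
  exists C : R,
    forall (V : choiceType) (adj : V -> seq V) (mu : V -> R) (w : V -> V -> R),
      is_weighted_graph adj mu w ->
      graph_connected adj ->
      graph_infinite V ->
      (forall x, mu0 <= mu x <= mu1) ->
      (forall x y, y \in adj x -> w0 <= w x y) ->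
      forall u : V -> R, inW0 adj mu w m u ->
      forall j : nat, (j.*2 <= m)%N ->
        (norminf (lapn adj mu w j u) <= C%:E * norm1 mu (grad adj mu w (lapn adj mu w j u)))%E.
Proof.
move=> Hmu0 Hmu1 Hw0 Hm.
exists (Cst mu0 mu1 w0) => V adj mu w [Hun Hsym Hwsym Hwpos Hmupos] Hconn Hinf Hmu Hw u HW j Hj.
exact: (@main_lemma R V adj mu w mu0 mu1 w0 Hmu0 Hw0 Hmu Hw Hsym m Hconn Hinf u HW j Hj).
Qed.
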